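(* Fix $j\in\{1,\dots,p\}$. Along the Lasso path defined below, the functions $\lambda\mapsto\|z_j(\lambda)\|_2$, $\lambda\mapsto\eta_j(\lambda)$ and $\lambda\mapsto\hat\sigma_j(\lambda)$ are nondecreasing on $(0,\infty)$, and $\tau_j(\lambda)\le 1/\|z_j(\lambda)\|_2$ for every $\lambda>0$. Moreover, if $\hat\gamma_j(\lambda)\neq 0$, then $\eta_j(\lambda)=\lambda n/\|z_j(\lambda)\|_2$.
   Context: $X=(x_1,\dots,x_p)\in\mathbb{R}^{n\times p}$ is a deterministic matrix with columns normalized so that $\|x_j\|_2^2=n$ for all $j$; $X_{-j}$ denotes the $n\times(p-1)$ matrix with columns $x_k$, $k\neq j$. For $\lambda>0$ let $\hat\gamma_j(\lambda)\in\arg\min_{b\in\mathbb{R}^{p-1}}\{\|x_j-X_{-j}b\|_2^2/(2n)+\lambda\|b\|_1\}$ (a Lasso solution; the residual below does not depend on which solution is chosen), $z_j(\lambda)=x_j-X_{-j}\hat\gamma_j(\lambda)$, $\eta_j(\lambda)=\max_{k\neq j}|x_k^Tz_j(\lambda)|/\|z_j(\lambda)\|_2$, $\tau_j(\lambda)=\|z_j(\lambda)\|_2/|x_j^Tz_j(\lambda)|$. Also let $\hat\sigma_j(\lambda)$ be the $\sigma$-component of the minimizer over $(b,\sigma)$, $\sigma\ge 0$, of $\|x_j-X_{-j}b\|_2^2/(2n\sigma)+\sigma/2+\lambda\|b\|_1$ (the scaled Lasso noise-level estimate for regressing $x_j$ on $X_{-j}$). *)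

(* Defs.v *)
From HB Require Import structures.
From mathcomp Require Import all_boot all_order all_algebra.
Set Implicit Arguments. Unset Strict Implicit. Unset Printing Implicit Defensive.
Import Order.TTheory GRing.Theory Num.Theory.
Local Open Scope ring_scope.

Section LassoDefs.
Variable R : rcfType.

Definition norm2 (m : nat) (v : 'cV[R]_m) : R :=
  Num.sqrt (\sum_i v i 0 ^+ 2).

Definition sqnorm2 (m : nat) (v : 'cV[R]_m) : R := \sum_i v i 0 ^+ 2.

Definition l1norm (m : nat) (b : 'cV[R]_m) : R := \sum_i `|b i 0|.

Definition dotv (m : nat) (u v : 'cV[R]_m) : R := \sum_i u i 0 * v i 0.

Definition resid (n p : nat) (X : 'M[R]_(n, p)) (j : 'I_p) (b : 'cV[R]_p.-1)
  : 'cV[R]_n := col j X - col' j X *m b.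

Definition lasso_obj (n p : nat) (X : 'M[R]_(n, p)) (j : 'I_p) (lam : R)
  (b : 'cV[R]_p.-1) : R :=
  sqnorm2 (resid X j b) / (2 * n)%:R + lam * l1norm b.

Definition is_lasso_sol (n p : nat) (X : 'M[R]_(n, p)) (j : 'I_p) (lam : R)
  (b : 'cV[R]_p.-1) : Prop :=
  forall b' : 'cV[R]_p.-1, lasso_obj X j lam b <= lasso_obj X j lam b'.

Definition etaj (n p : nat) (X : 'M[R]_(n, p)) (j : 'I_p) (z : 'cV[R]_n) : R :=
  (\big[Num.max/0]_(k < p | k != j) `|dotv (col k X) z|) / norm2 z.

Definition tauj (n p : nat) (X : 'M[R]_(n, p)) (j : 'I_p) (z : 'cV[R]_n) : R :=
  norm2 z / `|dotv (col j X) z|.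

(* Scaled-Lasso objective, defined on admissible pairs (b, sigma) with
   sigma >= 0: for sigma > 0 it is ||r||^2/(2 n sigma) + sigma/2 + lam ||b||_1;
   at sigma = 0 it is the lower semicontinuous extension, i.e. lam ||b||_1 when
   r = 0 (and +infinity, i.e. not admissible, when r <> 0). *)
Definition sl_admissible (n p : nat) (X : 'M[R]_(n, p)) (j : 'I_p)
  (b : 'cV[R]_p.-1) (s : R) : Prop :=
  0 < s \/ (s = 0 /\ resid X j b = 0).

Definition sl_obj (n p : nat) (X : 'M[R]_(n, p)) (j : 'I_p) (lam : R)
  (b : 'cV[R]_p.-1) (s : R) : R :=
  if 0 < s then sqnorm2 (resid X j b) / ((2 * n)%:R * s) + s / 2 + lam * l1norm b
  else lam * l1norm b.

Definition is_scaled_lasso_sol (n p : nat) (X : 'M[R]_(n, p)) (j : 'I_p)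
  (lam : R) (b : 'cV[R]_p.-1) (s : R) : Prop :=
  sl_admissible X j b s /\
  forall (b' : 'cV[R]_p.-1) (s' : R), sl_admissible X j b' s' ->
    sl_obj X j lam b s <= sl_obj X j lam b' s'.

End LassoDefs.

(* Main.v *)
Require Import Defs.
From HB Require Import structures.
From mathcomp Require Import all_boot all_order all_algebra.
From mathcomp Require Import ring lra.
Set Implicit Arguments. Unset Strict Implicit. Unset Printing Implicit Defensive.
Import Order.TTheory GRing.Theory Num.Theory.
Local Open Scope ring_scope.

Section Vec.
Variable R : rcfType.
Variable m : nat.
Implicit Types u v w : 'cV[R]_m.

Lemma dotvC u v : dotv u v = dotv v u.
Proof. by rewrite /dotv; apply: eq_bigr => i _; rewrite mulrC. Qed.

Lemma dotvDl u v w : dotv (u + v) w = dotv u w + dotv v w.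
Proof. by rewrite /dotv -big_split; apply: eq_bigr => i _; rewrite !mxE mulrDl. Qed.

Lemma dotvZl (a : R) u v : dotv (a *: u) v = a * dotv u v.
Proof. by rewrite /dotv mulr_sumr; apply: eq_bigr => i _; rewrite !mxE mulrA. Qed.

Lemma dotvNl u v : dotv (- u) v = - dotv u v.
Proof. by rewrite -scaleN1r dotvZl mulN1r. Qed.

Lemma dotvBl u v w : dotv (u - v) w = dotv u w - dotv v w.
Proof. by rewrite dotvDl dotvNl. Qed.

Lemma dotvDr u v w : dotv w (u + v) = dotv w u + dotv w v.
Proof. by rewrite dotvC dotvDl !(dotvC w). Qed.

Lemma dotvBr u v w : dotv w (u - v) = dotv w u - dotv w v.
Proof. by rewrite dotvC dotvBl !(dotvC w). Qed.

Lemma dotvZr (a : R) u v : dotv v (a *: u) = a * dotv v u.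
Proof. by rewrite dotvC dotvZl dotvC. Qed.

Lemma sqnormE u : sqnorm2 u = dotv u u.
Proof. by rewrite /sqnorm2 /dotv; apply: eq_bigr => i _; rewrite expr2. Qed.

Lemma sqnorm_ge0 u : 0 <= sqnorm2 u.
Proof. by rewrite /sqnorm2; apply: sumr_ge0 => i _; apply: sqr_ge0. Qed.

Lemma sqnorm_eq0 u : sqnorm2 u = 0 -> u = 0.
Proof.
move=> H; apply/matrixP => i k; rewrite (ord1 k) mxE.
have := psumr_eq0P (fun i _ => sqr_ge0 (u i 0)) H (i:=i) isT.
by move/eqP; rewrite sqrf_eq0 => /eqP.
Qed.

Lemma l1_ge0 u : 0 <= l1norm u.
Proof. by rewrite /l1norm; apply: sumr_ge0 => i _. Qed.

Lemma l1_gt0 u : u != 0 -> 0 < l1norm u.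
Proof.
move=> Hu; rewrite lt_def l1_ge0 andbT; apply/eqP => H; move/eqP: Hu; apply.
apply/matrixP => i k; rewrite (ord1 k) mxE.
have := psumr_eq0P (fun i _ => normr_ge0 (u i 0)) H (i:=i) isT.
by move/eqP; rewrite normr_eq0 => /eqP.
Qed.

Lemma l1Z (a : R) u : l1norm (a *: u) = `|a| * l1norm u.
Proof. by rewrite /l1norm mulr_sumr; apply: eq_bigr => i _; rewrite mxE normrM. Qed.

Lemma l1D u v : l1norm (u + v) <= l1norm u + l1norm v.
Proof. by rewrite /l1norm -big_split; apply: ler_sum => i _; rewrite mxE ler_normD. Qed.

Lemma sqnormB u v (t : R) :
  sqnorm2 (u - t *: v) = sqnorm2 u - 2 * t * dotv u v + t ^+ 2 * sqnorm2 v.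
Proof.
rewrite !sqnormE dotvBl !dotvBr !dotvZl !dotvZr (dotvC v u); ring.
Qed.

Lemma cs u v : dotv u v ^+ 2 <= sqnorm2 u * sqnorm2 v.
Proof.
have [B0|Bpos] := eqVneq (sqnorm2 v) 0.
  have -> : v = 0 by apply: sqnorm_eq0.
  rewrite /dotv big1 => [|i _]; last by rewrite mxE mulr0.
  by rewrite expr0n /= mulr_ge0 // sqnorm_ge0.
have Bgt : 0 < sqnorm2 v by rewrite lt_def Bpos sqnorm_ge0.
have := sqnorm_ge0 (sqnorm2 v *: u - dotv u v *: v).
rewrite sqnormB !sqnormE dotvZl dotvZl dotvZr -!sqnormE => H.
have : 0 <= sqnorm2 v * (sqnorm2 u * sqnorm2 v - dotv u v ^+ 2).
  by move: H; set B := sqnorm2 v; set A := sqnorm2 u; set D := dotv u v;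
     move=> H; rewrite (_ : B * (A * B - D ^+ 2) = B * (B * A) - 2 * D * (B * D) + D ^+ 2 * B) //; ring.
by rewrite pmulr_rge0 // subr_ge0.
Qed.

End Vec.
Section Lasso.
Variable R : rcfType.
Variables (n p : nat) (X : 'M[R]_(n, p)) (j : 'I_p).
Hypothesis Hn : (0 < n)%N.
Hypothesis Hcol : forall k : 'I_p, \sum_i X i k ^+ 2 = n%:R.

Let A := col' j X.
Let x := col j X.
Definition Mx (u : 'cV[R]_n) :=
  \big[Num.max/0]_(k < p | k != j) `|dotv (col k X) u|.

Lemma n_gt0 : 0 < n%:R :> R. Proof. by rewrite ltr0n. Qed.

Lemma colA k : col k A = col (lift j k) X.
Proof. by apply/matrixP => i l; rewrite !mxE. Qed.

Lemma sqnorm_colA k : sqnorm2 (col k A) = n%:R.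
Proof. by rewrite colA -(Hcol (lift j k)) /sqnorm2; apply: eq_bigr => i _; rewrite mxE. Qed.

Lemma Mx_ge0 u : 0 <= Mx u.
Proof.
rewrite /Mx; elim/big_ind: _ => //= a b Ha Hb.
by rewrite le_max Ha.
Qed.

Lemma Mx_ub u k : `|dotv (col k A) u| <= Mx u.
Proof. by rewrite colA /Mx (le_bigmax_cond _ (P := fun k => k != j)) // eq_sym neq_lift. Qed.

Lemma Mx_le u c : 0 <= c -> (forall k, `|dotv (col k A) u| <= c) -> Mx u <= c.
Proof.
move=> c0 H; rewrite /Mx; apply: bigmax_le => // i ij.
case: (unliftP j i) ij => [k -> _|-> ]; last by rewrite eqxx.
by rewrite -colA.
Qed.

Lemma dot_mul (b : 'cV[R]_p.-1) u :
  dotv (A *m b) u = \sum_k b k 0 * dotv (col k A) u.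
Proof.
rewrite /dotv; under eq_bigr do rewrite mxE big_distrl.
rewrite exchange_big; apply: eq_bigr => k _; rewrite big_distrr.
by apply: eq_bigr => i _; rewrite !mxE /=; ring.
Qed.

Lemma F3 (b : 'cV[R]_p.-1) u : dotv (A *m b) u <= l1norm b * Mx u.
Proof.
rewrite dot_mul /l1norm mulr_suml; apply: ler_sum => k _.
apply: le_trans (ler_norm _) _; rewrite normrM; apply: ler_wpM2l => //.
exact: Mx_ub.
Qed.

Lemma lim0 (K y : R) : (forall t, 0 < t -> t < 1 -> 0 <= t * t * K - t * y) -> y <= 0.
Proof.
move=> H; rewrite leNgt; apply/negP => y0.
set C := `|K| + 1.
have C0 : 0 < C by rewrite /C ltr_wpDl.
have D0 : 0 < y + 2 * C by apply: addr_gt0 => //; apply: mulr_gt0.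
set t := y / (y + 2 * C).
have t0 : 0 < t by rewrite divr_gt0.
have t1 : t < 1 by rewrite ltr_pdivrMr // mul1r ltrDl; apply: mulr_gt0.
have := H t t0 t1.
have tK : t * K <= t * C.
  by rewrite ler_pM2l // (le_trans (ler_norm K)) // /C lerDl.
have tC : t * C < y.
  rewrite /t mulrAC ltr_pdivrMr // ltr_pM2l //.
  lra.
move=> h; have : t * y <= t * (t * K) by rewrite -subr_ge0 mulrA.
rewrite ler_pM2l // => h2; have := le_lt_trans h2 (le_lt_trans tK tC).
by rewrite ltxx.
Qed.

Lemma sol_ineq lam b : is_lasso_sol X j lam b -> forall b',
  sqnorm2 (resid X j b) + (2 * n)%:R * lam * l1norm b <=
  sqnorm2 (resid X j b') + (2 * n)%:R * lam * l1norm b'.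
Proof.
move=> H b'; have := H b'; rewrite /lasso_obj.
have h2n : 0 < (2 * n)%:R :> R by rewrite ltr0n muln_gt0.
rewrite -(ler_pM2r h2n) !mulrDl !divfK ?gt_eqF //.
by rewrite ![lam * _ * _]mulrC !mulrA.
Qed.

Lemma residD b e t : resid X j (b + t *: e) = resid X j b - t *: (A *m e).
Proof. by rewrite /resid mulmxDr -scalemxAr opprD addrA. Qed.

Lemma l1_delta k : l1norm (delta_mx k 0 : 'cV[R]_p.-1) = 1.
Proof.
rewrite /l1norm (bigD1 k) //= big1 => [|i ik]; first by rewrite !mxE !eqxx normr1 addr0.
by rewrite !mxE (negbTE ik) normr0.
Qed.

Lemma F1 lam b k : is_lasso_sol X j lam b -> 0 <= lam ->
  `|dotv (col k A) (resid X j b)| <= lam * n%:R.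
Proof.
move=> H l0; set z := resid X j b.
have c0 : 0 <= (2 * n)%:R * lam by rewrite mulr_ge0.
have key t : 0 <= t ^+ 2 * n%:R - 2 * t * dotv z (col k A) + (2 * n)%:R * lam * `|t|.
  have := sol_ineq H (b + t *: delta_mx k 0).
  rewrite residD -colE sqnormB sqnorm_colA -/z.
  have := l1D b (t *: delta_mx k 0); rewrite l1Z l1_delta mulr1 => hl.
  move=> h; have h2 := ler_wpM2l c0 hl; rewrite mulrDr in h2; lra.
rewrite dotvC ler_norml; apply/andP; split.
  have : - 2 * dotv z (col k A) - 2 * (lam * n%:R) <= 0.
    apply: (lim0 (K := n%:R)) => t t0 t1; have := key (- t).
    rewrite normrN gtr0_norm // natrM; nra.
  lra.
have : 2 * dotv z (col k A) - 2 * (lam * n%:R) <= 0.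
  apply: (lim0 (K := n%:R)) => t t0 t1; have := key t.
  rewrite gtr0_norm // natrM; nra.
lra.
Qed.

Lemma F2 lam b : is_lasso_sol X j lam b ->
  dotv (A *m b) (resid X j b) = n%:R * lam * l1norm b.
Proof.
move=> H; set z := resid X j b; set w := A *m b.
have key t : -1 < t -> 0 <= t ^+ 2 * sqnorm2 w - 2 * t * dotv z w + (2 * n)%:R * lam * (t * l1norm b).
  move=> t1; have := sol_ineq H (b + t *: b).
  rewrite residD sqnormB -/z -/w.
  rewrite -{2}[b]scale1r -scalerDl l1Z ger0_norm; last by lra.
  rewrite mulrDl mul1r; lra.
have E1 : dotv w z - n%:R * lam * l1norm b <= 0.
  have : 2 * (dotv w z - n%:R * lam * l1norm b) <= 0.
    apply: (lim0 (K := sqnorm2 w)) => t t0 t1; have := key t.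
    rewrite natrM dotvC; nra.
  lra.
have E2 : n%:R * lam * l1norm b - dotv w z <= 0.
  have : 2 * (n%:R * lam * l1norm b - dotv w z) <= 0.
    apply: (lim0 (K := sqnorm2 w)) => t t0 t1; have := key (- t).
    rewrite natrM dotvC; nra.
  lra.
lra.
Qed.

Lemma dotv0l (u : 'cV[R]_n) : dotv 0 u = 0.
Proof. by rewrite /dotv big1 // => i _; rewrite mxE mul0r. Qed.

Lemma Mx_sol_le lam b : 0 <= lam -> is_lasso_sol X j lam b ->
  Mx (resid X j b) <= lam * n%:R.
Proof.
move=> l0 H; apply: Mx_le => [|k]; first by rewrite mulr_ge0.
exact: F1.
Qed.

Lemma Mx_sol lam b : 0 <= lam -> is_lasso_sol X j lam b -> b != 0 ->
  Mx (resid X j b) = lam * n%:R.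
Proof.
move=> l0 H b0; apply/le_anti; rewrite Mx_sol_le //=.
have := F3 b (resid X j b); rewrite (F2 H) => h.
have bp := l1_gt0 b0.
rewrite -(ler_pM2l bp); lra.
Qed.

Lemma wz_eq lam b : 0 <= lam -> is_lasso_sol X j lam b ->
  dotv (A *m b) (resid X j b) = l1norm b * Mx (resid X j b).
Proof.
move=> l0 H; have [->|b0] := eqVneq b 0.
  by rewrite mulmx0 dotv0l /l1norm big1 ?mul0r // => i _; rewrite mxE normr0.
by rewrite (Mx_sol l0 H b0) (F2 H); ring.
Qed.

Lemma residE b : resid X j b = x - A *m b. Proof. by []. Qed.

Lemma pair_ineq b1 b2 e1 e2 : 0 <= e1 -> 0 <= e2 ->
  dotv (A *m b1) (resid X j b1) = l1norm b1 * e1 ->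
  dotv (A *m b2) (resid X j b2) = l1norm b2 * e2 ->
  Mx (resid X j b1) <= e1 -> Mx (resid X j b2) <= e2 ->
  e1 * sqnorm2 (resid X j b2) - (e1 + e2) * dotv (resid X j b1) (resid X j b2)
    + e2 * sqnorm2 (resid X j b1) <= 0.
Proof.
move=> e10 e20 E1 E2 M1 M2.
set z1 := resid X j b1; set z2 := resid X j b2.
set w1 := A *m b1; set w2 := A *m b2.
have H1 : e1 * dotv w1 z2 <= e2 * dotv w1 z1.
  rewrite E1; have := F3 b1 z2 => h.
  have h2 : dotv w1 z2 <= l1norm b1 * e2.
    by apply: le_trans h _; apply: ler_wpM2l => //; apply: l1_ge0.
  have := ler_wpM2l e10 h2 => h3; apply: le_trans h3 _.
  by rewrite le_eqVlt; apply/orP; left; apply/eqP; ring.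
have H2 : e2 * dotv w2 z1 <= e1 * dotv w2 z2.
  rewrite E2; have := F3 b2 z1 => h.
  have h2 : dotv w2 z1 <= l1norm b2 * e1.
    by apply: le_trans h _; apply: ler_wpM2l => //; apply: l1_ge0.
  have := ler_wpM2l e20 h2 => h3; apply: le_trans h3 _.
  by rewrite le_eqVlt; apply/orP; left; apply/eqP; ring.
have Ew : w1 - w2 = z2 - z1.
  by rewrite /z1 /z2 !residE -/w1 -/w2 [RHS]addrC opprB addrA subrK.
clearbody z1 z2 w1 w2.
have E : e1 * sqnorm2 z2 - (e1 + e2) * dotv z1 z2 + e2 * sqnorm2 z1 =
         dotv (w1 - w2) (e1 *: z2 - e2 *: z1).
  rewrite Ew dotvBl !dotvBr !dotvZr !sqnormE (dotvC z2 z1); ring.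
rewrite E dotvBl !dotvBr !dotvZr; lra.
Qed.

Lemma K_ineq (z1 z2 : 'cV[R]_n) c1 c2 : 0 <= c1 -> 0 <= c2 ->
  c1 * sqnorm2 z2 - (c1 + c2) * dotv z1 z2 + c2 * sqnorm2 z1 <= 0 ->
  (c2 * norm2 z1 - c1 * norm2 z2) * (norm2 z1 - norm2 z2) <= 0.
Proof.
move=> c10 c20 h.
have hA := sqr_sqrtr (sqnorm_ge0 z1); have hB := sqr_sqrtr (sqnorm_ge0 z2).
rewrite /norm2 -/(sqnorm2 z1) -/(sqnorm2 z2).
set a := Num.sqrt (sqnorm2 z1) in hA *; set b := Num.sqrt (sqnorm2 z2) in hB *.
have Dab : dotv z1 z2 <= a * b.
  apply: le_trans (ler_norm _) _.
  rewrite -sqrtr_sqr /a /b -sqrtrM ?sqnorm_ge0 // ler_sqrt ?cs //.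
  by rewrite mulr_ge0 ?sqnorm_ge0.
have := ler_wpM2l (addr_ge0 c10 c20) Dab => h2.
rewrite -hA -hB in h.
have -> : (c2 * a - c1 * b) * (a - b) = c1 * b ^+ 2 + c2 * a ^+ 2 - (c1 + c2) * (a * b) by ring.
lra.
Qed.

Lemma etajE z : etaj X j z = Mx z / norm2 z. Proof. by []. Qed.

Lemma norm2_ge0 (z : 'cV[R]_n) : 0 <= norm2 z. Proof. exact: sqrtr_ge0. Qed.

Lemma resid0 : resid X j 0 = x. Proof. by rewrite residE mulmx0 subr0. Qed.

Lemma mu_mono l1 l2 b1 b2 : 0 < l1 -> l1 <= l2 ->
  is_lasso_sol X j l1 b1 -> is_lasso_sol X j l2 b2 ->
  Mx (resid X j b1) <= Mx (resid X j b2).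
Proof.
move=> l10 l12 H1 H2.
have l20 : 0 <= l2 by lra.
have n0 := n_gt0.
have hM1 := Mx_sol_le (ltW l10) H1.
have [b20|b2n] := eqVneq b2 0; last first.
  rewrite (Mx_sol l20 H2 b2n); apply: le_trans hM1 _; rewrite ler_pM2r //.
rewrite b20 resid0.
have [b10|b1n] := eqVneq b1 0; first by rewrite b10 resid0.
rewrite (Mx_sol (ltW l10) H1 b1n) leNgt; apply/negP => hx.
have bp := l1_gt0 b1n.
have h := F3 b1 x.
have ex : x = resid X j b1 + A *m b1 by rewrite residE subrK.
rewrite [in dotv _ x]ex dotvDr (F2 H1) -sqnormE in h.
have h3 : l1norm b1 * Mx x < l1norm b1 * (l1 * n%:R) by rewrite ltr_pM2l.
have := sqnorm_ge0 (A *m b1); lra.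
Qed.

Lemma part1 l1 l2 b1 b2 : 0 < l1 -> l1 <= l2 ->
  is_lasso_sol X j l1 b1 -> is_lasso_sol X j l2 b2 ->
  norm2 (resid X j b1) <= norm2 (resid X j b2) /\
  etaj X j (resid X j b1) <= etaj X j (resid X j b2).
Proof.
move=> l10 l12 H1 H2.
have l20 : 0 < l2 by lra.
have n0 := n_gt0.
have a0 := norm2_ge0 (resid X j b1); have b0 := norm2_ge0 (resid X j b2).
split.
  have c10 : 0 < l1 * n%:R by rewrite mulr_gt0.
  have c12 : l1 * n%:R <= l2 * n%:R by rewrite ler_pM2r.
  have E1 : dotv (A *m b1) (resid X j b1) = l1norm b1 * (l1 * n%:R)
    by rewrite (F2 H1); ring.
  have E2 : dotv (A *m b2) (resid X j b2) = l1norm b2 * (l2 * n%:R)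
    by rewrite (F2 H2); ring.
  have := K_ineq (ltW c10) (le_trans (ltW c10) c12)
     (pair_ineq (ltW c10) (le_trans (ltW c10) c12)
        E1 E2
        (Mx_sol_le (ltW l10) H1) (Mx_sol_le (ltW l20) H2)).
  set a := norm2 (resid X j b1) in a0 *; set b := norm2 (resid X j b2) in b0 * => h.
  rewrite leNgt; apply/negP => ba.
  have hab : 0 < a - b by rewrite subr_gt0.
  have := ler_wpM2r a0 c12; have := mulr_gt0 c10 hab => h1 h2.
  rewrite mulrBr in h1.
  have : 0 < (l2 * n%:R * a - l1 * n%:R * b) * (a - b).
    by apply: mulr_gt0 => //; lra.
  lra.
have m10 := Mx_ge0 (resid X j b1); have m20 := Mx_ge0 (resid X j b2).
have m12 := mu_mono l10 l12 H1 H2.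
have := K_ineq m10 m20 (pair_ineq m10 m20 (wz_eq (ltW l10) H1) (wz_eq (ltW l20) H2)
          (lexx _) (lexx _)).
rewrite !etajE.
move: m10 m20 m12 a0 b0.
set m1 := Mx _; set m2 := Mx _; set a := norm2 _; set b := norm2 _.
move=> m10 m20 m12 a0 b0 h.
have [az|ap] := eqVneq a 0.
  by rewrite az invr0 mulr0 divr_ge0.
have ag : 0 < a by rewrite lt_def ap a0.
have [bz|bp] := eqVneq b 0.
  rewrite bz invr0 mulr0; rewrite bz subr0 mulr0 subr0 in h.
  have : m2 * (a * a) <= 0 by lra.
  rewrite pmulr_lle0 ?mulr_gt0 // => m2le.
  have -> : m1 = 0 by lra.
  by rewrite mul0r.
have bg : 0 < b by rewrite lt_def bp b0.
rewrite ler_pdivrMr // mulrAC ler_pdivlMr //.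
rewrite leNgt; apply/negP => hh.
have : 0 < (m1 * b - m2 * a) * (b - a).
  apply: mulr_gt0; first by rewrite subr_gt0.
  rewrite subr_gt0 ltNge; apply/negP => ab.
  have : m1 * b <= m1 * a by rewrite ler_wpM2l.
  have : m1 * a <= m2 * a by rewrite ler_wpM2r.
  lra.
lra.
Qed.

Lemma part3 l b : 0 < l -> is_lasso_sol X j l b ->
  tauj X j (resid X j b) <= 1 / norm2 (resid X j b) /\
  (b != 0 -> etaj X j (resid X j b) = l * n%:R / norm2 (resid X j b)).
Proof.
move=> l0 H; split; last first.
  by move=> bn; rewrite etajE (Mx_sol (ltW l0) H bn).
have n0 := n_gt0.
rewrite /tauj -/x.
have ex : x = resid X j b + A *m b by rewrite residE subrK.
rewrite ex dotvDl (F2 H) -sqnormE.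
have hS := sqr_sqrtr (sqnorm_ge0 (resid X j b)).
rewrite -/(norm2 (resid X j b)) in hS.
move: hS; set N := norm2 _ => hS.
have N0 : 0 <= N by apply: sqrtr_ge0.
have bp := l1_ge0 b.
have [Nz|Np] := eqVneq N 0.
  by rewrite Nz mul0r invr0 mulr0.
have Ng : 0 < N by rewrite lt_def Np N0.
have Dg : 0 < sqnorm2 (resid X j b) + n%:R * l * l1norm b.
  rewrite -hS; apply: ltr_pwDl; first by rewrite exprn_gt0.
  by rewrite !mulr_ge0 // ltW.
rewrite gtr0_norm // ler_pdivrMr // mul1r mulrC ler_pdivlMr // -expr2 hS.
by rewrite lerDl !mulr_ge0 // ltW.
Qed.

Definition rho b := Num.sqrt (sqnorm2 (resid X j b) / n%:R).

Lemma rhoS b : sqnorm2 (resid X j b) = rho b ^+ 2 * n%:R.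
Proof.
rewrite /rho sqr_sqrtr ?divfK ?gt_eqF ?n_gt0 //.
by rewrite divr_ge0 ?sqnorm_ge0 // ltW // n_gt0.
Qed.

Lemma rho_ge0 b : 0 <= rho b. Proof. exact: sqrtr_ge0. Qed.

Lemma rho0 b : rho b = 0 -> resid X j b = 0.
Proof.
move=> /eqP; rewrite sqrtr_eq0 ler_pdivrMr ?n_gt0 // mul0r => h.
by apply: sqnorm_eq0; apply/le_anti; rewrite h sqnorm_ge0.
Qed.

Lemma sqnorm0 : sqnorm2 (0 : 'cV[R]_n) = 0.
Proof. by rewrite sqnormE dotv0l. Qed.

Lemma sl_val lam b : sl_admissible X j b (rho b) /\
  sl_obj X j lam b (rho b) = rho b + lam * l1norm b.
Proof.
have [r0|rn] := eqVneq (rho b) 0.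
  split; first by right; split => //; apply: rho0.
  by rewrite /sl_obj r0 ltxx add0r.
have rg : 0 < rho b by rewrite lt_def rn rho_ge0.
split; first by left.
have n0 : n%:R != 0 :> R by rewrite gt_eqF ?n_gt0.
rewrite /sl_obj rg rhoS natrM; field.
by rewrite n0 rn.
Qed.

Lemma sl_sol lam b s : is_scaled_lasso_sol X j lam b s ->
  s = rho b /\ forall b', rho b + lam * l1norm b <= rho b' + lam * l1norm b'.
Proof.
move=> [adm min].
have n0 : n%:R != 0 :> R by rewrite gt_eqF ?n_gt0.
have srho : s = rho b.
  case: adm => [sg|[-> r0]]; last by rewrite /rho r0 sqnorm0 mul0r sqrtr0.
  have [r0|rn] := eqVneq (rho b) 0.
    have := min b 0 (or_intror (conj erefl (rho0 r0))).
    rewrite /sl_obj sg ltxx rhoS r0 expr0n /= !mul0r add0r; lra.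
  have rg : 0 < rho b by rewrite lt_def rn rho_ge0.
  have := min b (rho b) (sl_val lam b).1; rewrite (sl_val lam b).2.
  rewrite /sl_obj sg rhoS => h.
  have e : rho b ^+ 2 * n%:R / ((2 * n)%:R * s) + s / 2 - rho b =
           (s - rho b) ^+ 2 / (2 * s).
    rewrite natrM; field; by rewrite n0 gt_eqF //= pnatr_eq0.
  have h2 : (s - rho b) ^+ 2 / (2 * s) <= 0 by rewrite -e; lra.
  have h3 : 0 <= (s - rho b) ^+ 2 / (2 * s) by rewrite divr_ge0 ?sqr_ge0 // mulr_ge0 // ltW.
  have h4 : (s - rho b) ^+ 2 / (2 * s) = 0 by apply/le_anti; rewrite h2 h3.
  have e2 : (s - rho b) ^+ 2 = 0.
    have -> : (s - rho b) ^+ 2 = ((s - rho b) ^+ 2 / (2 * s)) * (2 * s).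
      by field; rewrite gt_eqF.
    by rewrite h4 mul0r.
  by move/eqP: e2; rewrite sqrf_eq0 subr_eq0 => /eqP.
split => // b'.
have := min b' (rho b') (sl_val lam b').1.
by rewrite (sl_val lam b').2 srho (sl_val lam b).2.
Qed.

Lemma part2 l1 l2 b1 b2 s1 s2 : 0 < l1 -> l1 < l2 ->
  is_scaled_lasso_sol X j l1 b1 s1 -> is_scaled_lasso_sol X j l2 b2 s2 -> s1 <= s2.
Proof.
move=> l10 l12 /sl_sol [-> m1] /sl_sol [-> m2].
have := m1 b2; have := m2 b1.
have := l1_ge0 b1; have := l1_ge0 b2.
nra.
Qed.
End Lasso.

Theorem proposition1 (R : rcfType) (n p : nat) (X : 'M[R]_(n, p)) (j : 'I_p)
  (Hn : (0 < n)%N)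
  (Hcol : forall k : 'I_p, \sum_i X i k ^+ 2 = n%:R) :
  (* ||z_j(lam)||_2 and eta_j(lam) are nondecreasing in lam > 0 *)
  (forall (l1 l2 : R) (b1 b2 : 'cV[R]_p.-1),
      0 < l1 -> l1 <= l2 ->
      is_lasso_sol X j l1 b1 -> is_lasso_sol X j l2 b2 ->
      norm2 (resid X j b1) <= norm2 (resid X j b2) /\
      etaj X j (resid X j b1) <= etaj X j (resid X j b2)) /\
  (* sigma_hat_j(lam) is nondecreasing in lam > 0 *)
  (forall (l1 l2 : R) (b1 b2 : 'cV[R]_p.-1) (s1 s2 : R),
      0 < l1 -> l1 < l2 ->
      is_scaled_lasso_sol X j l1 b1 s1 -> is_scaled_lasso_sol X j l2 b2 s2 ->
      s1 <= s2) /\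
  (* tauj bound, and etaj formula on a nonzero solution *)
  (forall (l : R) (b : 'cV[R]_p.-1),
      0 < l -> is_lasso_sol X j l b ->
      tauj X j (resid X j b) <= 1 / norm2 (resid X j b) /\
      (b != 0 -> etaj X j (resid X j b) = l * n%:R / norm2 (resid X j b))).
Proof.
split; first exact: (part1 Hn Hcol).
split; first exact: (part2 Hn).
exact: (part3 Hn Hcol).
Qed.
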